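(* Let $(\mu,\varphi,\omega^*,\omega^\varepsilon)\in\mathbb F^\times\times\mathbb F^3$. For any $\kappa,\lambda,c\in\mathbb F^\times$, the quadruple $(\kappa\lambda,\mu\lambda,c,\lambda)$ is feasible for $(\mu,\varphi,\omega^*,\omega^\varepsilon)$ if and only if: (i) $\kappa$ is a root of $\frac{x^4}{\mu q}-\frac{\omega^\varepsilon+q^{-1}\varphi}{q+q^{-1}}x^3+(\omega^*-\mu q^{-1}-\mu^{-1}q)x^2-\frac{\omega^\varepsilon-q\varphi}{q+q^{-1}}x+\mu q$; (ii) $\lambda$ is a root of $\kappa\mu q x^6+\left(\kappa^{-1}\mu q-\frac{\omega^\varepsilon-q\varphi}{q+q^{-1}}\right)x^4+\left(\frac{\omega^\varepsilon+q^{-1}\varphi}{q+q^{-1}}-\kappa\mu^{-1}q^{-1}\right)x^2-\frac{1}{\kappa\mu q}$; (iii) $c$ is a root of $x^2-rx+1$, where $r=\frac{\varphi+(\kappa\lambda+\kappa^{-1}\lambda^{-1})(\mu\lambda q-\mu^{-1}\lambda^{-1}q^{-1})}{\lambda-\lambda^{-1}}$ if $\lambda^2\ne1$ and $r=\frac{\omega^\varepsilon-(\kappa\lambda+\kappa^{-1}\lambda^{-1})(\mu\lambda+\mu^{-1}\lambda^{-1})}{\lambda q+\lambda^{-1}q^{-1}}$ if $\lambda^2=1$.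
   Context: $\mathbb F$ is an algebraically closed field and $q\in\mathbb F^\times$ is a root of unity of order $d\notin\{1,2,4\}$ (so $q^4\ne1$). For $(a,b,c,\lambda)\in(\mathbb F^\times)^4$ and $(\mu,\varphi,\omega^*,\omega^\varepsilon)\in\mathbb F^\times\times\mathbb F^3$, $(a,b,c,\lambda)$ is called feasible for $(\mu,\varphi,\omega^*,\omega^\varepsilon)$ if $\mu=b\lambda^{-1}$, $\varphi=(c+c^{-1})(\lambda-\lambda^{-1})-(a+a^{-1})(bq-b^{-1}q^{-1})$, $\omega^*=(c+c^{-1})(a+a^{-1})+(b+b^{-1})(\lambda q+\lambda^{-1}q^{-1})$, and $\omega^\varepsilon=(a+a^{-1})(b+b^{-1})+(c+c^{-1})(\lambda q+\lambda^{-1}q^{-1})$. *)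

(* Defs.v *)
From HB Require Import structures.
From mathcomp Require Import all_boot all_order all_algebra all_field.
Set Implicit Arguments. Unset Strict Implicit. Unset Printing Implicit Defensive.
Import GRing.Theory.
Local Open Scope ring_scope.

Definition feasible (F : fieldType) (q : F) (a b c lam : F)
    (mu phi ws we : F) : Prop :=
  [/\ a != 0, b != 0, c != 0 & lam != 0] /\
  [/\ mu = b * lam^-1,
      phi = (c + c^-1) * (lam - lam^-1) - (a + a^-1) * (b * q - b^-1 * q^-1),
      ws = (c + c^-1) * (a + a^-1) + (b + b^-1) * (lam * q + lam^-1 * q^-1)
    & we = (a + a^-1) * (b + b^-1) + (c + c^-1) * (lam * q + lam^-1 * q^-1)].

Definition kappa_poly (F : fieldType) (q mu phi ws we : F) : {poly F} :=
  (mu * q)^-1 *: 'X^4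
  - ((we + q^-1 * phi) / (q + q^-1)) *: 'X^3
  + (ws - mu * q^-1 - mu^-1 * q) *: 'X^2
  - ((we - q * phi) / (q + q^-1)) *: 'X
  + (mu * q)%:P.

Definition lambda_poly (F : fieldType) (q mu phi ws we kappa : F) : {poly F} :=
  (kappa * mu * q) *: 'X^6
  + (kappa^-1 * mu * q - (we - q * phi) / (q + q^-1)) *: 'X^4
  + ((we + q^-1 * phi) / (q + q^-1) - kappa * mu^-1 * q^-1) *: 'X^2
  - ((kappa * mu * q)^-1)%:P.

Definition r_val (F : fieldType) (q mu phi ws we kappa lam : F) : F :=
  if lam ^+ 2 != 1 then
    (phi + (kappa * lam + kappa^-1 * lam^-1)
             * (mu * lam * q - mu^-1 * lam^-1 * q^-1)) / (lam - lam^-1)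
  else
    (we - (kappa * lam + kappa^-1 * lam^-1) * (mu * lam + mu^-1 * lam^-1))
      / (lam * q + lam^-1 * q^-1).

Definition c_poly (F : fieldType) (r : F) : {poly F} :=
  'X^2 - r *: 'X + 1.

(* Main.v *)
Require Import Defs.
From HB Require Import structures.
From mathcomp Require Import all_boot all_order all_algebra all_field.
From mathcomp Require Import ring.
Import GRing.Theory.
Local Open Scope ring_scope.

Section Aux.
Variable F : fieldType.
Variables (q m k l C phi ws we : F).
Hypotheses (hq : q != 0) (hQ : q + q^-1 != 0) (hm : m != 0) (hk : k != 0) (hl : l != 0).

Lemma hQ2 : q * q + 1 != 0.
Proof.
have -> : q * q + 1 = q * (q + q^-1) by rewrite mulrDr mulfV.
by rewrite mulf_neq0.
Qed.

Definition phi0 := C * (l - l^-1) - (k * l + (k * l)^-1) * (m * l * q - (m * l)^-1 * q^-1).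
Definition we0 := (k * l + (k * l)^-1) * (m * l + (m * l)^-1) + C * (l * q + l^-1 * q^-1).
Definition ws0 := C * (k * l + (k * l)^-1) + (m * l + (m * l)^-1) * (l * q + l^-1 * q^-1).

Lemma ii_ident : (lambda_poly q m phi ws we k).[l] =
  (phi - phi0) * (q * l ^+ 4 + l ^+ 2 / q) / (q + q^-1)
  + (we - we0) * (l ^+ 2 - l ^+ 4) / (q + q^-1).
Proof.
rewrite /lambda_poly /phi0 /we0 !(hornerD, hornerN, hornerZ, hornerXn, hornerC, hornerX).
by field; rewrite ?hq ?hQ2 ?hm ?hk ?hl.
Qed.

Lemma i_ident : (kappa_poly q m phi ws we).[k] =
  k ^+ 2 * (ws - ws0)
  + (phi - phi0) * (q * k - q^-1 * k ^+ 3) / (q + q^-1)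
  - (we - we0) * (k ^+ 3 + k) / (q + q^-1).
Proof.
rewrite /kappa_poly /phi0 /we0 /ws0 !(hornerD, hornerN, hornerZ, hornerXn, hornerC, hornerX).
by field; rewrite ?hq ?hQ2 ?hm ?hk ?hl.
Qed.

Lemma r_fwd : l != 0 -> phi = phi0 -> we = we0 ->
  r_val q m phi ws we k l = C.
Proof.
move=> _ -> ->; rewrite /r_val /phi0 /we0.
case: ifP => h.
  have hd : l - l^-1 != 0.
    apply: contraNneq h => e; apply/eqP.
    have : l * (l - l^-1) = 0 by rewrite e mulr0.
    rewrite mulrBr mulfV // expr2 => /eqP; rewrite subr_eq0 => /eqP ->; done.
  apply: (mulIf hd); rewrite mulfVK //; by field; rewrite ?hq ?hQ2 ?hm ?hk ?hl.
have hl2 : l ^+ 2 = 1 by apply/eqP; rewrite -(negbK (_ == _)) h.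
have li : l^-1 = l by apply: (mulfI hl); rewrite mulfV // -expr2 hl2.
have hd : l * q + l^-1 * q^-1 != 0.
  by rewrite li -mulrDr mulf_neq0.
apply: (mulIf hd); rewrite mulfVK //. by field; rewrite ?hq ?hQ2 ?hm ?hk ?hl.
Qed.

Lemma r_bwd : r_val q m phi ws we k l = C ->
  (l ^+ 2 != 1 -> phi = phi0) /\ (l ^+ 2 = 1 -> we = we0).
Proof.
rewrite /r_val /phi0 /we0; split => h2.
  move: H; rewrite h2 => e.
  have hd : l - l^-1 != 0.
    apply: contraNneq h2 => e'; apply/eqP.
    have : l * (l - l^-1) = 0 by rewrite e' mulr0.
    rewrite mulrBr mulfV // expr2 => /eqP; rewrite subr_eq0 => /eqP ->; done.
  have e2 := congr1 (fun x => x * (l - l^-1)) e; rewrite /= mulfVK // in e2.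
  apply: (addIr ((k * l + k^-1 / l) * (m * l * q - m^-1 / l / q))).
  rewrite e2; by field; rewrite ?hq ?hQ2 ?hm ?hk ?hl.
move: H; rewrite h2 eqxx /= => e.
have li : l^-1 = l by apply: (mulfI hl); rewrite mulfV // -expr2 h2.
have hd : l * q + l^-1 * q^-1 != 0 by rewrite li -mulrDr mulf_neq0.
have e2 := congr1 (fun x => x * (l * q + l^-1 * q^-1)) e; rewrite /= mulfVK // in e2.
apply: (addIr (- ((k * l + k^-1 / l) * (m * l + m^-1 / l)))); rewrite e2; by field; rewrite ?hq ?hQ2 ?hm ?hk ?hl.
Qed.
End Aux.

Lemma c_root (F : fieldType) (r c : F) : c != 0 ->
  root (c_poly r) c = (r == c + c^-1).
Proof.
move=> hc; rewrite /root /c_poly !(hornerD, hornerN, hornerZ, hornerXn, hornerC, hornerX).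
apply/eqP/eqP => e.
  have : (c ^+ 2 - r * c + 1) / c = 0 by rewrite e mul0r.
  move=> e'; apply/eqP; rewrite eq_sym -subr_eq0; apply/eqP; rewrite -e'.
  by field; rewrite hc.
by rewrite e; field; rewrite hc.
Qed.

Lemma q_facts (F : fieldType) (q : F) (d : nat) :
  d.-primitive_root q -> d \notin [:: 1%N; 2%N; 4%N] -> q != 0 /\ q + q^-1 != 0.
Proof.
move=> hq hd.
have d0 := prim_order_gt0 hq.
have q0 : q != 0.
  apply/eqP => e; have := prim_expr_order hq; rewrite e expr0n.
  by case: d d0 {hd hq} => // n _ /eqP; rewrite eq_sym oner_eq0.
split => //; apply/eqP => e.
have q2 : q ^+ 2 = -1.
  have : q * (q + q^-1) = 0 by rewrite e mulr0.
  rewrite mulrDr mulfV // -expr2 => /eqP; rewrite addr_eq0 => /eqP //.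
have : (d %| 4)%N by rewrite (prim_order_dvd hq) (exprM q 2 2) q2 sqrrN expr1n.
move: hd; case: d d0 {hq} => [|[|[|[|[|n]]]]] //.
Qed.

Theorem theorem5p1 (F : closedFieldType) (q : F) (d : nat)
    (hq : d.-primitive_root q) (hd : d \notin [:: 1%N; 2%N; 4%N])
    (mu phi ws we : F) (hmu : mu != 0)
    (kappa lam c : F) (hk : kappa != 0) (hl : lam != 0) (hc : c != 0) :
  feasible q (kappa * lam) (mu * lam) c lam mu phi ws we <->
  [/\ root (kappa_poly q mu phi ws we) kappa,
      root (lambda_poly q mu phi ws we kappa) lam
    & root (c_poly (r_val q mu phi ws we kappa lam)) c].
Proof.
have [q0 hQ] := @q_facts _ q d hq hd.
rewrite c_root //.
split.
  move=> [_ [_ ephi ews ewe]].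
  have e1 : phi = phi0 _ q mu kappa lam (c + c^-1) by [].
  have e3 : we = we0 _ q mu kappa lam (c + c^-1) by [].
  have e2 : ws = ws0 _ q mu kappa lam (c + c^-1) by [].
  split.
  - rewrite /root (@i_ident _ q mu kappa lam (c + c^-1) phi ws we q0 hQ hmu hk hl).
    by rewrite e1 e2 e3 !subrr !mul0r mulr0 !addr0 subrr.
  - rewrite /root (@ii_ident _ q mu kappa lam (c + c^-1) phi ws we q0 hQ hmu hk hl).
    by rewrite e1 e3 !subrr !mul0r addr0.
  - by rewrite (@r_fwd _ q mu kappa lam (c + c^-1) phi ws we q0 hQ hmu hk hl hl e1 e3).
move=> [hi hii /eqP hr].
have [h1 h2] := @r_bwd _ q mu kappa lam (c + c^-1) phi ws we q0 hQ hmu hk hl hr.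
have e13 : phi = phi0 _ q mu kappa lam (c + c^-1) /\ we = we0 _ q mu kappa lam (c + c^-1).
  move: hii; rewrite /root (@ii_ident _ q mu kappa lam (c + c^-1) phi ws we q0 hQ hmu hk hl) => /eqP hii.
  have hQi : (q + q^-1)^-1 != 0 by rewrite invr_eq0.
  case: (boolP (lam ^+ 2 == 1)) => [/eqP l2 | l2].
    have e3 := h2 l2; split => //.
    move: hii; rewrite e3 subrr !mul0r addr0.
    have -> : lam ^+ 4 = 1 by rewrite (exprM lam 2 2) l2 expr1n.
    rewrite l2 mulr1 mul1r mulfK // => /eqP; rewrite subr_eq0 => /eqP //.
  have e1 := h1 l2; split => //.
  move: hii; rewrite e1 subrr !mul0r add0r => /eqP; rewrite -mulrA mulf_eq0 => /orP [|].
    by rewrite subr_eq0 => /eqP.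
  rewrite mulf_eq0 invr_eq0 (negbTE hQ) orbF => hh; exfalso; move: l2.
  have : lam ^+ 2 * (1 - lam ^+ 2) == 0.
    by rewrite mulrBr mulr1 -exprD.
  rewrite mulf_eq0 expf_eq0 (negbTE hl) andbF /= subr_eq0 eq_sym => ->; done.
case: e13 => e1 e3.
have e2 : ws = ws0 _ q mu kappa lam (c + c^-1).
  move: hi; rewrite /root (@i_ident _ q mu kappa lam (c + c^-1) phi ws we q0 hQ hmu hk hl).
  rewrite e1 e3 !subrr !mul0r subr0 addr0 mulf_eq0 expf_eq0 (negbTE hk) andbF /=.
  by rewrite subr_eq0 => /eqP.
split.
  by rewrite !mulf_neq0.
split => //.
by rewrite mulfK.
Qed.
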